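(* Let $p$ be a prime and work over a field of characteristic $p$. For an element $x$ of a (graded) pre-Lie algebra put $[a,b]:=a\circ b-(-1)^{|a||b|}b\circ a$ and $x^{[k]}:=(\cdots((x\circ x)\circ x)\cdots)\circ x$ ($k$ factors). Then: (a) In every pre-Lie algebra the graded Jacobi identity $(-1)^{|a_1||a_3|}[[a_1,a_2],a_3]+(-1)^{|a_2||a_1|}[[a_2,a_3],a_1]+(-1)^{|a_3||a_2|}[[a_3,a_1],a_2]=0$ holds; moreover $[x,x]=0$ for all $x$ if $p=2$, and $[[x,x],x]=0$ for all $x$ if $p=3$. (b) The identity $(a^{[p^k]})^{[p^l]}=a^{[p^{k+l}]}$ does not hold identically (i.e. it fails for some $k,l\ge0$) in the free pre-Lie algebra on one generator $a$ of even degree. Likewise, the identity $(b^{[2p^k]})^{[p^l]}=b^{[2p^{k+l}]}$ does not hold identically in the free pre-Lie algebra on one generator $b$ of odd degree. (c) The identity $[a,b^{[p]}]=[\cdots[[a,b],b],\dots,b]$ ($p$ copies of $b$) does not hold identically in the free pre-Lie algebra on two generators $a,b$ with $b$ even. (d) In every pre-Lie algebra, for all even elements $c_0,c_1$, one has $(c_1+c_0)^{[p]}=c_1^{[p]}+c_0^{[p]}+\sum_{i=1}^{p-1}d_i(c_1,c_0)$, where $i\cdot d_i(c_1,c_0)=\sum[\cdots[[[c_1,c_0],c_{\epsilon_1}],c_{\epsilon_2}],\dots,c_{\epsilon_{p-2}}]$, the sum running over $(\epsilon_1,\dots,\epsilon_{p-2})\in\{0,1\}^{p-2}$ with $\ep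silon_1+\dots+\epsilon_{p-2}=i-1$.
   Context: A (graded, right) pre-Lie algebra is a graded vector space with a bilinear product $\circ$ of degree $0$ such that $(a\circ b)\circ c-a\circ(b\circ c)$ is graded symmetric in $b$ and $c$. Equivalently, $a\circ[b,c]=(a\circ b)\circ c-(-1)^{|b||c|}(a\circ c)\circ b$. Parity ''even''/''odd'' refers to this grading $|\cdot|$. *)

(* Defs.v *)
From HB Require Import structures.
From mathcomp Require Import all_boot all_order all_algebra.
Set Implicit Arguments. Unset Strict Implicit. Unset Printing Implicit Defensive.
Import Order.TTheory GRing.Theory Num.Theory.
Local Open Scope ring_scope.

Definition psign (K : fieldType) (i j : int) : K := (-1) ^+ (absz i * absz j)%N.

Record gpreLie (K : fieldType) := GPreLie {
  gcar : lmodType K;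
  gpl : gcar -> gcar -> gcar;
  gplDl : forall x y z, gpl (x + y) z = gpl x z + gpl y z;
  gplZl : forall (k : K) x z, gpl (k *: x) z = k *: gpl x z;
  gplDr : forall x y z, gpl x (y + z) = gpl x y + gpl x z;
  gplZr : forall (k : K) x y, gpl x (k *: y) = k *: gpl x y;
  ghom : int -> gcar -> Prop;
  ghom0 : forall n, ghom n 0;
  ghomD : forall n x y, ghom n x -> ghom n y -> ghom n (x + y);
  ghomZ : forall n (k : K) x, ghom n x -> ghom n (k *: x);
  ghom_span : forall v : gcar, exists s : seq (int * gcar),
      (forall e, e \in s -> ghom e.1 e.2) /\ v = \sum_(e <- s) e.2;
  ghom_direct : forall s : seq (int * gcar), uniq (map fst s) ->
      (forall e, e \in s -> ghom e.1 e.2) -> \sum_(e <- s) e.2 = 0 ->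
      forall e, e \in s -> e.2 = 0;
  ghom_pl : forall i j x y, ghom i x -> ghom j y -> ghom (i + j) (gpl x y);
  gprelie : forall i j k a b c, ghom i a -> ghom j b -> ghom k c ->
      gpl (gpl a b) c - gpl a (gpl b c)
      = psign K j k *: (gpl (gpl a c) b - gpl a (gpl c b))
}.

Section Ops.
Variables (K : fieldType) (A : gpreLie K).
Local Notation V := (gcar A).
Let pl := @gpl K A.

Definition gbr (i j : int) (a b : V) : V := pl a b - psign K i j *: pl b a.

(* x^{[n]} = (...((x o x) o x) ...) o x with n factors (n >= 1; x^{[0]} := x) *)
Definition gpow (x : V) (n : nat) : V := iter n.-1 (fun y => pl y x) x.

Fixpoint itbr (da db : int) (a b : V) (m : nat) : V :=
  match m with
  | 0 => a
  | m'.+1 => gbr (da + m'%:Z * db) db (itbr da db a b m') b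
  end.

Fixpoint nestbr (d0 d1 : int) (c0 c1 : V) (dy : int) (y : V) (s : seq bool) : V :=
  match s with
  | [::] => y
  | e :: s' => nestbr d0 d1 c0 c1 (dy + (if e then d1 else d0))
                 (gbr dy (if e then d1 else d0) y (if e then c1 else c0)) s'
  end.
End Ops.

Arguments ghom {K} g _ _.
Arguments gpl {K} g _ _.
Arguments gbr {K} A i j a b.
Arguments gpow {K} A x n.
Arguments itbr {K} A da db a b m.
Arguments nestbr {K} A d0 d1 c0 c1 dy y s.

(* Main.v *)
Require Import Defs.
From HB Require Import structures.
From mathcomp Require Import all_boot all_order all_algebra.
Import Order.TTheory GRing.Theory Num.Theory.
Local Open Scope ring_scope.

From mathcomp Require Import boolp zify.

Module Aux.
Set Implicit Arguments. Unset Strict Implicit. Unset Printing Implicit Defensive.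
Import Order.TTheory GRing.Theory Num.Theory.
Local Open Scope ring_scope.
Section EndRing.
Variable W : zmodType.
Variable w0 : W.
Hypothesis w0nz : w0 != 0.

Definition addmap of w0 != 0 := {f : W -> W | forall x y, f (x + y) = f x + f y}.
Local Notation AM := (addmap w0nz).
HB.instance Definition _ := gen_eqMixin AM.
HB.instance Definition _ := gen_choiceMixin AM.

Lemma am_ext (f g : AM) : (forall w, sval f w = sval g w) -> f = g.
Proof.
case: f g => f hf [g hg] /= H.
have efg : f = g by apply: funext.
subst g; congr exist; exact: Prop_irrelevance.
Qed.

Program Definition am0 : AM := exist _ (fun _ => 0) _.
Next Obligation. by rewrite addr0. Qed.
Program Definition am1 : AM := exist _ (fun w => w) _.
Program Definition amadd (f g : AM) : AM := exist _ (fun w => sval f w + sval g w) _.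
Next Obligation. case: f g => f hf [g hg] /=; rewrite hf hg; by rewrite addrACA. Qed.
Program Definition amopp (f : AM) : AM := exist _ (fun w => - sval f w) _.
Next Obligation. case: f => f hf /=; by rewrite hf opprD. Qed.
Program Definition ammul (f g : AM) : AM := exist _ (fun w => sval f (sval g w)) _.
Next Obligation. case: f g => f hf [g hg] /=; by rewrite hg hf. Qed.

Lemma amaddA : associative amadd.
Proof. by move=> f g h; apply: am_ext => w /=; rewrite addrA. Qed.
Lemma amaddC : commutative amadd.
Proof. by move=> f g; apply: am_ext => w /=; rewrite addrC. Qed.
Lemma amadd0 : left_id am0 amadd.
Proof. by move=> f; apply: am_ext => w /=; rewrite add0r. Qed.
Lemma amaddN : left_inverse am0 amopp amadd.
Proof. by move=> f; apply: am_ext => w /=; rewrite addNr. Qed.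
Lemma ammulA : associative ammul.
Proof. by move=> f g h; apply: am_ext. Qed.
Lemma ammul1 : left_id am1 ammul.
Proof. by move=> f; apply: am_ext. Qed.
Lemma ammulr1 : right_id am1 ammul.
Proof. by move=> f; apply: am_ext. Qed.
Lemma ammulDl : left_distributive ammul amadd.
Proof. by move=> f g h; apply: am_ext. Qed.
Lemma ammulDr : right_distributive ammul amadd.
Proof. by move=> f g h; apply: am_ext => w /=; case: f => f hf /=; rewrite hf. Qed.
Lemma am1_neq0 : am1 != am0.
Proof. apply/eqP => /(congr1 (fun f => sval f w0)) /= /eqP; by rewrite (negbTE w0nz). Qed.

HB.instance Definition _ := GRing.isNzRing.Build AM amaddA amaddC amadd0 amaddN
  ammulA ammul1 ammulr1 ammulDl ammulDr am1_neq0.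

Lemma amE_mul (f g : AM) w : sval (f * g) w = sval f (sval g w). Proof. by []. Qed.
Lemma amE_add (f g : AM) w : sval (f + g) w = sval f w + sval g w. Proof. by []. Qed.
Lemma amE_opp (f : AM) w : sval (- f) w = - sval f w. Proof. by []. Qed.
End EndRing.

Section Sval.
Variable W : zmodType.
Variable w0 : W.
Hypothesis w0nz : w0 != 0.
Local Notation AM := (@addmap W w0 w0nz).

Lemma sval_exp (f : AM) n w : sval (f ^+ n) w = iter n (sval f) w.
Proof. elim: n => [|n IH] //=; by rewrite exprS amE_mul IH. Qed.
Lemma sval_sum (I : Type) (r : seq I) (P : pred I) (F : I -> AM) w :
  sval (\sum_(i <- r | P i) F i) w = \sum_(i <- r | P i) sval (F i) w.
Proof. by apply: (big_morph (fun f : AM => sval f w)) => //. Qed.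
Lemma sval_muln (f : AM) n w : sval (f *+ n) w = sval f w *+ n.
Proof. elim: n => [|n IH] //; by rewrite !mulrS amE_add IH. Qed.
End Sval.

Section AdPow.
Variable E : nzRingType.

Program Definition Lm (A : E) : addmap (oner_neq0 E) := exist _ (fun Z => A * Z) _.
Next Obligation. by rewrite mulrDr. Qed.
Program Definition Rm (A : E) : addmap (oner_neq0 E) := exist _ (fun Z => Z * A) _.
Next Obligation. by rewrite mulrDl. Qed.

Lemma adpow (A B : E) n :
  iter n (fun Z => Z * A - A * Z) B =
  \sum_(k < n.+1) ((- A) ^+ k * B * A ^+ (n - k)) *+ 'C(n, k).
Proof.
have cm : GRing.comm (Rm A) (- Lm A).
  apply: am_ext => w /=.
  by rewrite mulNr mulrA.
have := exprDn_comm n cm.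
move/(congr1 (fun f => sval f B)).
rewrite sval_exp sval_sum => H.
have -> : iter n (fun Z => Z * A - A * Z) B = iter n (sval (Rm A + - Lm A)) B.
  by elim: n {H} => //= n ->.
rewrite H; apply: eq_bigr => k _.
rewrite sval_muln amE_mul !sval_exp; congr (_ *+ _).
have -> : forall m Z, iter m (sval (- Lm A)) Z = (- A) ^+ m * Z.
  by elim=> [|m IH] Z /=; rewrite ?mul1r // IH exprS mulNr mulNr mulrA.
have -> : forall m Z, iter m (sval (Rm A)) Z = Z * A ^+ m.
  by elim=> [|m IH] Z /=; rewrite ?mulr1 // IH exprSr mulrA.
by [].
Qed.

Variable p : nat.
Hypothesis hp : p \in [pchar E].

Lemma signbin i : (i < p)%N -> (-1) ^+ i *+ 'C(p.-1, i) = 1 :> E.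
Proof.
have pp := pcharf_prime hp.
have p0 : (0 < p)%N by apply: prime_gt0.
elim: i => [|i IH] Hi; first by rewrite bin0.
have Hb : 'C(p.-1, i.+1)%:R = - 'C(p.-1, i)%:R :> E.
  have := binS p.-1 i; rewrite prednK // => Hc.
  have : (p %| 'C(p, i.+1))%N by apply: prime_dvd_bin => //; rewrite Hi.
  case/dvdnP => m Hm.
  apply/eqP; rewrite -subr_eq0 opprK -natrD -Hc Hm natrM (pcharf0 hp) mulr0 //.
rewrite -mulr_natr Hb exprS mulrN mulNr mul1r mulNr opprK mulr_natr IH //.
exact: ltnW.
Qed.

Lemma adpow_p (A B : E) :
  iter p.-1 (fun Z => Z * A - A * Z) B = \sum_(k < p) A ^+ k * B * A ^+ (p.-1 - k).
Proof.
have p0 : (0 < p)%N by apply: prime_gt0; exact: pcharf_prime hp.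
rewrite adpow prednK //; apply: eq_bigr => k _.
rewrite exprNn -!mulrA -mulrnAl signbin ?mul1r //.
Qed.
End AdPow.

Lemma big_tuple_cons (R : Type) (idx : R) (op : Monoid.com_law idx) n
    (F : n.+1.-tuple bool -> R) :
  \big[op/idx]_(t : n.+1.-tuple bool) F t =
  op (\big[op/idx]_(t : n.-tuple bool) F [tuple of true :: t])
     (\big[op/idx]_(t : n.-tuple bool) F [tuple of false :: t]).
Proof.
rewrite (reindex (fun bt : bool * n.-tuple bool => [tuple of bt.1 :: bt.2])) /=.
  rewrite -(pair_big xpredT xpredT (fun (b : bool) (t : n.-tuple bool) => F [tuple of b :: t])) /=.
  by rewrite big_bool.
exists (fun t : n.+1.-tuple bool => (thead t, [tuple of behead t])) => [[b t]|t] _ /=.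
  by rewrite theadE; congr pair; apply: val_inj.
by rewrite -tuple_eta.
Qed.

Lemma big_tuple0 (R : Type) (idx : R) (op : Monoid.com_law idx) (F : 0.-tuple bool -> R) :
  \big[op/idx]_(t : 0.-tuple bool) F t = F [tuple].
Proof. by rewrite (big_pred1 [tuple]) // => t; rewrite /= [t]tuple0; apply/esym/eqP. Qed.

Lemma comm_lin (R : pzRingType) (Q T A1 A2 : R) : GRing.comm Q T ->
  (A1 * T + A2) * Q - Q * (A1 * T + A2) = (A1 * Q - Q * A1) * T + (A2 * Q - Q * A2).
Proof.
move=> c; rewrite mulrDl mulrDr mulrBl opprD addrACA; congr (_ + _).
by rewrite -mulrA -c mulrA mulrA.
Qed.

Lemma comm_C (R : pzRingType) (Z A B T : R) : GRing.comm Z T -> GRing.comm A T ->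
  Z * (A * T + B) - (A * T + B) * Z = (Z * A - A * Z) * T + (Z * B - B * Z).
Proof.
move=> cZ cA; rewrite mulrDr mulrDl opprD addrACA mulrBl; congr (_ + _).
by rewrite mulrA -[A * T * Z]mulrA -cZ mulrA.
Qed.

Section Jac.
Variables (E : nzRingType) (p : nat) (X Y : E).
Hypothesis hp : p \in [pchar E].

Definition brE (u v : E) := u * v - v * u.
Fixpoint nestE (Z : E) (s : seq bool) : E :=
  match s with [::] => Z | b :: s' => nestE (brE Z (if b then X else Y)) s' end.

Definition PP : {poly E} := X%:P * 'X + Y%:P.

Lemma coefPS Q k : (Q * PP)`_k = (if k is k'.+1 then Q`_k' * X else 0) + Q`_k * Y.
Proof. by rewrite /PP mulrDr mulrA coefD coefMX coefMC coefMC; case: k. Qed.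

Lemma powP_hi n k : (n < k)%N -> (PP ^+ n)`_k = 0.
Proof.
elim: n k => [|n IH] k Hk; first by rewrite expr0 coefC; case: k Hk.
rewrite exprSr coefPS IH ?mul0r ?addr0; last exact: ltnW.
by case: k Hk => // k Hk; rewrite IH ?mul0r.
Qed.

Lemma powP_top n : (PP ^+ n)`_n = X ^+ n.
Proof.
elim: n => [|n IH]; first by rewrite expr0 coefC.
by rewrite exprSr coefPS IH powP_hi // mul0r addr0 exprSr.
Qed.

Lemma powP_0 n : (PP ^+ n)`_0 = Y ^+ n.
Proof.
elim: n => [|n IH]; first by rewrite expr0 coefC.
by rewrite exprSr coefPS IH add0r exprSr.
Qed.

Lemma powP_sum n : \sum_(k < n.+1) (PP ^+ n)`_k = (X + Y) ^+ n.
Proof.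
elim: n => [|n IH]; first by rewrite big_ord1 expr0 coefC.
rewrite [RHS]exprSr mulrDr -IH mulr_suml mulr_suml.
under eq_bigr do rewrite exprSr coefPS.
rewrite big_split /=; congr (_ + _).
  by rewrite big_ord_recl /= add0r; apply: eq_bigr.
by rewrite big_ord_recr /= powP_hi // mul0r addr0.
Qed.

Lemma deriv_exp_nc (Q : {poly E}) n :
  (Q ^+ n.+1)^`() = \sum_(j < n.+1) Q ^+ j * Q^`() * Q ^+ (n - j).
Proof.
elim: n => [|n IH]; first by rewrite big_ord1 !expr1 expr0 mulr1 mul1r.
rewrite exprSr derivM IH [RHS]big_ord_recr /= subnn expr0 mulr1 mulr_suml; congr (_ + _).
apply: eq_bigr => j _; rewrite -!mulrA -exprSr subSn //; rewrite -ltnS; exact: ltn_ord.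
Qed.

Lemma derivPP : PP^`() = X%:P.
Proof. by rewrite /PP derivD derivC addr0 derivM derivC mul0r add0r derivX mulr1. Qed.

Let f (Z : {poly E}) := Z * PP - PP * Z.

Lemma f_lin A1 A2 : f (A1 * 'X + A2) = f A1 * 'X + f A2.
Proof. rewrite /f; exact: comm_lin (commr_polyX PP). Qed.

Lemma iter_lin n A1 A2 : iter n f (A1 * 'X + A2) = iter n f A1 * 'X + iter n f A2.
Proof. by elim: n => [|n IH] //=; rewrite IH f_lin. Qed.

Lemma fC Z : f Z%:P = (brE Z X)%:P * 'X + (brE Z Y)%:P.
Proof.
rewrite /f /PP comm_C; first by rewrite /brE !polyCB !polyCM.
  exact: commr_polyX.
exact: commr_polyX.
Qed.
Lemma nest_exp n Z :
  iter n f Z%:P = \sum_(s : n.-tuple bool) (nestE Z s)%:P * 'X^(count id s).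
Proof.
elim: n Z => [|n IH] Z.
  by rewrite big_tuple0 /= expr0 mulr1.
rewrite iterSr fC iter_lin !IH big_tuple_cons mulr_suml; congr (_ + _).
by apply: eq_bigr => t _ /=; rewrite exprSr mulrA.
Qed.

Lemma jac_coef i : (1 <= i <= p.-1)%N ->
  (PP ^+ p)`_i *+ i =
  \sum_(s : (p - 2).-tuple bool | count id s == i.-1) nestE (brE X Y) s.
Proof.
move=> /andP [i1 ip].
have pp := pcharf_prime hp; have p2 := prime_gt1 pp.
case: i i1 ip => // j _ ip /=.
set q := (p - 2)%N.
have Hq : p = q.+2 by rewrite /q -addn2 subnK.
have -> : PP ^+ p = PP ^+ q.+2 by rewrite -Hq.
rewrite -coef_deriv deriv_exp_nc derivPP.
have hpP : p \in [pchar {poly E}] by rewrite pchar_poly.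
have HH := adpow_p hpP PP X%:P; rewrite Hq -[(q.+2).-1]/(q.+1) in HH.
rewrite -HH.
have fCX := fC X; rewrite /f in fCX.
rewrite iterSr /= fCX {1}/brE subrr polyC0 mul0r add0r.
have := nest_exp q (brE X Y); rewrite /f => ->.
rewrite coef_sum [RHS]big_mkcond; apply: eq_bigr => s _.
rewrite coefCM coefXn eq_sym; case: (count id s == j); by rewrite ?mulr1 ?mulr0.
Qed.

Lemma jacobson :
  [/\ (X + Y) ^+ p = \sum_(k < p.+1) (PP ^+ p)`_k, (PP ^+ p)`_0 = Y ^+ p,
      (PP ^+ p)`_p = X ^+ p &
      forall i, (1 <= i <= p.-1)%N -> (PP ^+ p)`_i *+ i =
       \sum_(s : (p - 2).-tuple bool | count id s == i.-1) nestE (brE X Y) s].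
Proof. split; [by rewrite powP_sum | exact: powP_0 | exact: powP_top | exact: jac_coef]. Qed.
End Jac.

Lemma psign_evr (K : fieldType) i j : ~~ odd (absz j) -> psign K i j = 1.
Proof. by move=> h; rewrite /psign -signr_odd oddM (negbTE h) andbF expr0. Qed.
Lemma psign_evl (K : fieldType) i j : ~~ odd (absz i) -> psign K i j = 1.
Proof. by move=> h; rewrite /psign -signr_odd oddM (negbTE h) expr0. Qed.

Lemma sign_pm1 (R : nzRingType) p : p \in [pchar R] -> (-1) ^+ p.-1 = 1 :> R.
Proof.
move=> hp; have pp := pcharf_prime hp.
rewrite -signr_odd; have [p2|op] := even_prime pp.
  subst p => /=; rewrite expr1; apply/eqP; rewrite -subr_eq0.
  by rewrite -opprD oppr_eq0 -(natrD R 1 1) (pcharf0 hp).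
have p0 : (0 < p)%N by apply: prime_gt0.
by move: op; rewrite -{1}(prednK p0) /= => /negbTE ->; rewrite expr0.
Qed.

Section GPL.
Variables (K : fieldType) (A : gpreLie K).
Local Notation V := (gcar A).
Local Notation "x * y" := (gpl A x y) : pl_scope.
Lemma gpl0l y : gpl A 0 y = 0.
Proof. by apply: (addrI (gpl A 0 y)); rewrite addr0 -gplDl addr0. Qed.
Lemma gpl0r y : gpl A y 0 = 0.
Proof. by apply: (addrI (gpl A y 0)); rewrite addr0 -gplDr addr0. Qed.
Lemma gplNr x y : gpl A x (- y) = - gpl A x y.
Proof. by rewrite -scaleN1r gplZr scaleN1r. Qed.
Lemma gplNl x y : gpl A (- x) y = - gpl A x y.
Proof. by rewrite -scaleN1r gplZl scaleN1r. Qed.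
Lemma gplBr x y z : gpl A x (y - z) = gpl A x y - gpl A x z.
Proof. by rewrite gplDr gplNr. Qed.
Lemma gplBl x y z : gpl A (x - y) z = gpl A x z - gpl A y z.
Proof. by rewrite gplDl gplNl. Qed.
Lemma ghomB n x y : ghom A n x -> ghom A n y -> ghom A n (x - y).
Proof. by move=> hx hy; apply: ghomD => //; rewrite -scaleN1r; apply: ghomZ. Qed.

Lemma prelie_any b c j k : ghom A j b -> ghom A k c -> ~~ odd (absz k) ->
  forall v, gpl A (gpl A v b) c - gpl A v (gpl A b c)
          = gpl A (gpl A v c) b - gpl A v (gpl A c b).
Proof.
move=> hb hc hk v; have [s [hs ->]] := ghom_span v.
elim: s hs => [|e s IH] hs.
  by rewrite big_nil !gpl0l subrr.
rewrite big_cons !gplDl; set u := \sum_(e <- s) e.2.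
have -> : forall a b' c' d : V, a + b' - (c' + d) = (a - c') + (b' - d).
  by move=> *; rewrite opprD addrACA.
rewrite IH; last by move=> x xs; apply: hs; rewrite in_cons xs orbT.
rewrite (gprelie (hs e (mem_head _ _)) hb hc) psign_evr // scale1r.
by move=> *; rewrite opprD addrACA.
Qed.

Lemma gbr_hom i j x y : ghom A i x -> ghom A j y -> ghom A (i + j) (gbr A i j x y).
Proof.
move=> hx hy; apply: ghomB; first exact: ghom_pl.
by apply: ghomZ; rewrite addrC; apply: ghom_pl.
Qed.
End GPL.


Section PartD.
Variables (K : fieldType) (A : gpreLie K).
Local Notation V := (gcar A).
Definition WW := (K * V)%type.
Definition ww0 : WW := (1, 0).
Lemma ww0nz : ww0 != 0.
Proof. by apply/eqP => /(congr1 fst) /= /eqP; rewrite oner_eq0. Qed.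
Local Notation EW := (addmap ww0nz).

Lemma pairD (a c : K) (b d : V) : (a, b) + (c, d) = (a + c, b + d) :> WW.
Proof. by []. Qed.
Lemma pairN (a : K) (b : V) : - (a, b) = (- a, - b) :> WW.
Proof. by []. Qed.

Program Definition Rop (x : V) : EW := exist _ (fun w : WW => (0, w.1 *: x + gpl A w.2 x)) _.
Next Obligation. by rewrite /= pairD addr0 gplDl scalerDl addrACA. Qed.

Lemma RopE x w : sval (Rop x) w = (0, w.1 *: x + gpl A w.2 x). Proof. by []. Qed.

Lemma Rop_add x y : Rop (x + y) = Rop x + Rop y.
Proof. by apply: am_ext => w; rewrite amE_add !RopE /= pairD addr0 gplDr scalerDr addrACA. Qed.

Lemma Rop_br b c j k : ghom A j b -> ghom A k c -> ~~ odd (absz k) ->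
  Rop c * Rop b - Rop b * Rop c = Rop (gpl A b c - gpl A c b).
Proof.
move=> hb hc hk; apply: am_ext => [[a v]].
rewrite amE_add amE_opp !amE_mul !RopE /= pairN pairD oppr0 addr0; congr pair.
rewrite !scale0r !add0r.
rewrite !gplDl !gplZl gplBr scalerBr.
rewrite opprD addrACA; congr (_ + _).
have := prelie_any hb hc hk v.
move/eqP; rewrite subr_eq => /eqP ->.
by rewrite addrC -[_ - _ + _]addrA addKr addrC.
Qed.

Lemma Rop_w0 x : sval (Rop x) ww0 = (0, x).
Proof. by rewrite RopE /= scale1r gpl0l addr0. Qed.

Lemma Rop_pow x n : sval (Rop x ^+ n.+1) ww0 = (0, gpow A x n.+1).
Proof.
elim: n => [|n IH]; first by rewrite expr1 Rop_w0.
by rewrite exprS amE_mul IH RopE /= scale0r add0r.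
Qed.

Lemma pchar_EW p : p \in [pchar K] -> p \in [pchar EW].
Proof.
move=> hp; apply/andP; split; first exact: pcharf_prime hp.
apply/eqP; apply: am_ext => [[a v]]; rewrite sval_muln /=.
have -> : forall n, (a, v) *+ n = (a *+ n, v *+ n) :> WW.
  by elim=> [|n IH] //; rewrite !mulrS IH.
by rewrite -mulr_natr (pcharf0 hp) mulr0 -scaler_nat (pcharf0 hp) scale0r.
Qed.

Lemma Rop_sum (I : Type) (r : seq I) (P : pred I) (F : I -> V) :
  Rop (\sum_(i <- r | P i) F i) = \sum_(i <- r | P i) Rop (F i).
Proof.
apply: (big_morph Rop Rop_add); apply: am_ext => w.
by rewrite RopE gpl0r scaler0 addr0.
Qed.

Lemma brE_Rop y c dy d : ghom A dy y -> ghom A d c -> ~~ odd (absz d) ->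
  brE (Rop y) (Rop c) = - Rop (gbr A dy d y c).
Proof.
by move=> hy hc hd; rewrite /gbr psign_evr // scale1r -(Rop_br hy hc hd) /brE opprB.
Qed.

Lemma nestE_opp (X Y Z : EW) s : nestE X Y (- Z) s = - nestE X Y Z s.
Proof.
elim: s Z => [|b s IH] Z //=; rewrite -IH; congr nestE.
by rewrite /brE mulNr mulrN opprB opprK addrC.
Qed.

Lemma nest_Rop d0 d1 c0 c1 : ~~ odd (absz d0) -> ~~ odd (absz d1) ->
  ghom A d0 c0 -> ghom A d1 c1 -> forall s y dy, ghom A dy y ->
  nestE (Rop c1) (Rop c0) (Rop y) s =
  (-1) ^+ (size s) * Rop (nestbr A d0 d1 c0 c1 dy y s).
Proof.
move=> e0 e1 h0 h1; elim=> [|b s IH] y dy hy /=; first by rewrite expr0 mul1r.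
have -> : (if b then Rop c1 else Rop c0) = Rop (if b then c1 else c0) by case: b.
have hc : ghom A (if b then d1 else d0) (if b then c1 else c0) by case: b.
have he : ~~ odd (absz (if b then d1 else d0)) by clear hc; case: b.
rewrite (brE_Rop hy hc he) nestE_opp (IH _ _ (gbr_hom hy hc)).
by rewrite exprS mulN1r mulNr.
Qed.
End PartD.

Lemma sum_split (U : zmodType) n (G : nat -> U) : (0 < n)%N ->
  \sum_(k < n.+1) G k = G 0%N + G n + \sum_(1 <= i < n) G i.
Proof.
case: n => // n _; rewrite big_ord_recl big_ord_recr /= big_add1 /= big_mkord.
by rewrite /bump /= add1n -addrA [_ + G _]addrC.
Qed.

Section PartD2.
Variables (K : fieldType) (A : gpreLie K).
Local Notation V := (gcar A).
Local Notation EW := (addmap (@ww0nz K A)).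

Lemma part_d p (hK : p \in [pchar K]) (d0 d1 : int) (c0 c1 : V) :
  ~~ odd (absz d0) -> ~~ odd (absz d1) -> ghom A d0 c0 -> ghom A d1 c1 ->
  forall dd : nat -> V,
  (forall i : nat, (1 <= i <= p - 1)%N ->
     i%:R *: dd i =
     \sum_(e : (p - 2).-tuple bool | count id e == i.-1)
        nestbr A d0 d1 c0 c1 (d1 + d0) (gbr A d1 d0 c1 c0) e) ->
  gpow A (c1 + c0) p = gpow A c1 p + gpow A c0 p + \sum_(1 <= i < p) dd i.
Proof.
move=> e0 e1 h0 h1 dd Hdd.
have hE := pchar_EW A hK; have pp := pcharf_prime hK; have p2 := prime_gt1 pp.
have p0 : (0 < p)%N by apply: ltnW.
have [J1 J2 J3 J4] := jacobson (Rop c1) (Rop c0) hE.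
set G := fun k => (sval ((PP (Rop c1) (Rop c0) ^+ p)`_k) (@ww0 K A)).2.
have key : gpow A (c1 + c0) p = \sum_(k < p.+1) G k.
  have := Rop_pow (c1 + c0) p.-1; rewrite prednK // Rop_add J1 sval_sum.
  move/(congr1 snd) => /= <-.
  by apply: (big_morph snd) => //.
have G0 : G 0%N = gpow A c0 p.
  by rewrite /G J2; have := Rop_pow c0 p.-1; rewrite prednK // => ->.
have Gp : G p = gpow A c1 p.
  by rewrite /G J3; have := Rop_pow c1 p.-1; rewrite prednK // => ->.
have Gk : forall k, (1 <= k < p)%N -> G k = dd k.
  move=> k /andP [k1 kp].
  have hk : (1 <= k <= p.-1)%N by rewrite k1 -ltnS prednK.
  have := J4 k hk.
  rewrite (brE_Rop h1 h0 e0).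
  under eq_bigr => s _ do rewrite nestE_opp (nest_Rop e0 e1 h0 h1 _ (gbr_hom h1 h0)) size_tuple.
  have sgn : - ((-1) ^+ (p - 2)) = 1 :> EW.
    rewrite -mulN1r -exprS; have -> : (p - 2).+1 = p.-1 by rewrite -subSn // subSS subn1.
    exact: sign_pm1 hE.
  under eq_bigr => s _ do rewrite -mulNr sgn mul1r.
  rewrite -Rop_sum -Hdd; last by rewrite k1 subn1 -ltnS prednK.
  move/(congr1 (fun f => (sval f (@ww0 K A)).2)); rewrite sval_muln Rop_w0 /=.
  rewrite /G; set u := sval _ _.
  have -> : (u *+ k).2 = u.2 *+ k by case: u => a v; elim: (k) => // n IH; rewrite !mulrS /= IH.
  rewrite -scaler_nat; apply: scalerI.
  by rewrite -(dvdn_pcharf hK) gtnNdvd.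
rewrite key sum_split // G0 Gp [gpow A c0 p + _]addrC; congr (_ + _).
by apply: eq_big_nat => i /Gk.
Qed.
End PartD2.


Lemma sign_absz (K : fieldType) (z : int) : (-1) ^+ (absz z) = (-1) ^ z :> K.
Proof. case: z => n //=; rewrite /exprz invr_sign //. Qed.

Lemma psignC (K : fieldType) i j : psign K i j = psign K j i.
Proof. by rewrite /psign mulnC. Qed.

Lemma psignDl (K : fieldType) i j k : psign K (i + j) k = psign K i k * psign K j k.
Proof.
rewrite /psign !exprM !sign_absz expfzDr ?exprMn //.
by rewrite oppr_eq0 oner_eq0.
Qed.

Lemma psign_sq (K : fieldType) i j : psign K i j * psign K i j = 1.
Proof. by rewrite /psign -signr_odd; case: odd; rewrite ?mulN1r ?opprK ?mul1r. Qed.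

Lemma ac9 (U : zmodType) (a b c d e f g h i : U) :
  (a + b + c) + (d + e + f) + (g + h + i) = (a + f + h) + (b + d + i) + (c + e + g).
Proof. by rewrite (AC ((3*3)*3) ((1*6*8)*(2*4*9)*(3*5*7))). Qed.

Section PA.
Variables (K : fieldType) (A : gpreLie K).
Local Notation V := (gcar A).
Local Notation m := (gpl A).

Lemma T_exp x y z (sxy sxz syz : K) : sxz * sxz = 1 ->
  sxz *: (m (m x y - sxy *: m y x) z - (sxz * syz) *: m z (m x y - sxy *: m y x)) =
  sxz *: m (m x y) z + (- (sxz * sxy)) *: m (m y x) z +
  ((- syz) *: m z (m x y) + (syz * sxy) *: m z (m y x)).
Proof.
move=> hs.
rewrite gplBl gplBr !gplZl !gplZr !scalerBr !scalerA !scaleNr.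
rewrite !mulrA hs !mul1r; congr (_ + _); by rewrite opprB addrC.
Qed.

Lemma grpX (s t : K) (u1 u2 u3 u4 : V) : u1 - u2 = t *: (u4 - u3) ->
  s *: u1 + ((- s) *: u2 + (s * t) *: u3) + (- (t * s)) *: u4 = 0.
Proof.
move=> h.
have -> : s *: u1 + ((- s) *: u2 + (s * t) *: u3) = s *: (u1 - u2) + (s * t) *: u3.
  by rewrite scalerBr scaleNr addrA.
by rewrite h scalerA -scalerDr subrK scaleNr mulrC subrr.
Qed.

Lemma grpY (s t : K) (u1 u2 u3 u4 : V) : u1 - u2 = t *: (u4 - u3) ->
  (- (t * s)) *: u4 + s *: u1 + ((- s) *: u2 + (s * t) *: u3) = 0.
Proof. by move=> h; rewrite -(grpX s h) (AC (3) ((2*3)*1)). Qed.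

Lemma grpZ (s t : K) (u1 u2 u3 u4 : V) : u1 - u2 = t *: (u4 - u3) ->
  ((- s) *: u2 + (s * t) *: u3) + (- (t * s)) *: u4 + s *: u1 = 0.
Proof. by move=> h; rewrite -(grpX s h) (AC (3) ((3*1)*2)). Qed.

Lemma jacobi i1 i2 i3 a1 a2 a3 : ghom A i1 a1 -> ghom A i2 a2 -> ghom A i3 a3 ->
     psign K i1 i3 *: gbr A (i1 + i2) i3 (gbr A i1 i2 a1 a2) a3
     + psign K i2 i1 *: gbr A (i2 + i3) i1 (gbr A i2 i3 a2 a3) a1
     + psign K i3 i2 *: gbr A (i3 + i1) i2 (gbr A i3 i1 a3 a1) a2 = 0.
Proof.
move=> h1 h2 h3; rewrite /gbr !psignDl !T_exp ?psign_sq // ac9.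
rewrite (psignC K i2 i1) (psignC K i3 i1) (psignC K i3 i2).
rewrite grpX; last by rewrite (gprelie h1 h2 h3).
rewrite grpY; last by rewrite (gprelie h2 h3 h1) psignC.
rewrite grpZ; last by rewrite (gprelie h3 h1 h2).
by rewrite !addr0.
Qed.

Lemma br_sq i x : 2%N \in [pchar K] -> ghom A i x -> gbr A i i x x = 0.
Proof.
move=> h2 _; rewrite /gbr /psign -signr_odd; case: odd; last by rewrite expr0 scale1r subrr.
rewrite expr1 scaleN1r opprK; have := pcharf0 h2.
by move=> H; rewrite -mulr2n -scaler_nat H scale0r. Qed.

Lemma br_cube i x : ghom A i x -> gbr A (i + i) i (gbr A i i x x) x = 0.
Proof.
move=> h; rewrite /gbr psignDl psign_sq scale1r gplBl gplBr !gplZl !gplZr.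
set s := psign K i i.
have -> : forall a b c d : V, a - s *: b - (c - s *: d) = (a - c) - s *: (b - d).
  by move=> a b c d; rewrite scalerBr opprB opprB (AC (2*2) ((1*4)*(3*2))).
by rewrite {1}(gprelie h h h) subrr.
Qed.
End PA.


Lemma uniq_map_inj (T U : eqType) (f : T -> U) s x y :
  uniq (map f s) -> x \in s -> y \in s -> f x = f y -> x = y.
Proof.
elim: s => //= a s IH /andP [na us]; rewrite !in_cons.
case/orP => [/eqP->|xs]; case/orP => [/eqP->|ys] // fxy.
- by move: na; rewrite fxy map_f.
- by move: na; rewrite -fxy map_f.
- exact: IH.
Qed.

Section Models.
Variables (K : fieldType) (da db : int).
Definition MC := ({poly K} * {poly K})%type.

Definition gh (n : int) (x : MC) : Prop :=
  (forall m : nat, (m.+1)%:Z * db != n -> x.1`_m = 0) /\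
  (forall m : nat, da + m%:Z * db != n -> x.2`_m = 0).

Lemma MCD (a b c d : {poly K}) : (a, b) + (c, d) = (a + c, b + d) :> MC. Proof. by []. Qed.
Lemma MCZ (k : K) (a b : {poly K}) : k *: (a, b) = (k *: a, k *: b) :> MC. Proof. by []. Qed.

Lemma gh0 n : gh n 0.
Proof. by split=> m _; rewrite coef0. Qed.
Lemma ghD n x y : gh n x -> gh n y -> gh n (x + y).
Proof.
case: x y => [x1 x2] [y1 y2] [h1 h2] [h3 h4]; rewrite MCD.
by split=> m hm /=; rewrite coefD ?h1 ?h2 ?h3 ?h4 ?addr0.
Qed.
Lemma ghZ n k x : gh n x -> gh n (k *: x).
Proof.
case: x => [x1 x2] [h1 h2]; rewrite MCZ.
by split=> m hm /=; rewrite coefZ ?h1 ?h2 ?mulr0.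
Qed.

Lemma sum_pair (I : Type) (r : seq I) (f g : I -> {poly K}) :
  \sum_(i <- r) ((f i, g i) : MC) = (\sum_(i <- r) f i, \sum_(i <- r) g i).
Proof. elim: r => [|a r IH]; by rewrite ?big_nil // !big_cons IH MCD. Qed.

Lemma gh_span (v : MC) : exists s : seq (int * MC),
  (forall e, e \in s -> gh e.1 e.2) /\ v = \sum_(e <- s) e.2.
Proof.
exists ([seq (((m.+1)%:Z * db)%R, ((v.1`_m *: 'X^m, 0) : MC)) | m <- index_iota 0 (size v.1)]
     ++ [seq ((da + m%:Z * db)%R, ((0, v.2`_m *: 'X^m) : MC)) | m <- index_iota 0 (size v.2)]).
split.
  move=> e; rewrite mem_cat; case/orP => /mapP [m _ ->] /=; split=> k hk /=;
    rewrite ?coef0 // coefZ coefXn; case: eqP => [ek|]; rewrite ?mulr0 //;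
    by move: hk; rewrite ek eqxx.
rewrite big_cat !big_map /= !sum_pair !big1_eq MCD addr0 add0r.
rewrite !big_mkord -!poly_def !coefK; by case: v.
Qed.

Lemma gh_direct (s : seq (int * MC)) : uniq (map fst s) ->
  (forall e, e \in s -> gh e.1 e.2) -> \sum_(e <- s) e.2 = 0 ->
  forall e, e \in s -> e.2 = 0.
Proof.
move=> us hs s0 e es.
have us' := map_uniq us.
have comp0 : forall (proj : MC -> {poly K}) (deg : nat -> int),
    {morph proj : x y / x + y} -> proj 0 = 0 ->
    (forall e', e' \in s -> forall m, deg m != e'.1 -> (proj e'.2)`_m = 0) ->
    forall m, (proj e.2)`_m = 0.
  move=> proj deg pD p0 hh m.
  have [dm|dm] := eqVneq (deg m) e.1; last exact: hh.
  have H := congr1 proj s0; rewrite (big_morph proj pD p0) p0 in H.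
  have := congr1 (fun q : {poly K} => q`_m) H.
  rewrite coef_sum (bigD1_seq e) //= coef0 => H2.
  suff Hz : \sum_(e' <- s | e' != e) (proj e'.2)`_m = 0 by rewrite Hz addr0 in H2.
  rewrite big_seq_cond; apply: big1 => e' /andP [e's ne'].
  apply: hh => //; apply/eqP => h; move/negP: ne'; apply; apply/eqP.
  by apply: (uniq_map_inj us) => //=; rewrite -h dm.
have h1 := comp0 fst (fun m => (m.+1)%:Z * db) (fun x y => erefl) erefl
  (fun e' he' => (hs e' he').1).
have h2 := comp0 snd (fun m => da + m%:Z * db) (fun x y => erefl) erefl
  (fun e' he' => (hs e' he').2).
move: h1 h2; case: e.2 => a b /= h1 h2.
by congr pair; apply/polyP => m; rewrite coef0.
Qed.

Definition sh (x : MC) : MC := ('X * x.1, 'X * x.2).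
Lemma shD x y : sh (x + y) = sh x + sh y.
Proof. by case: x y => [a b] [c d]; rewrite /sh /= !mulrDr. Qed.
Lemma shZ k x : sh (k *: x) = k *: sh x.
Proof. by case: x => [a b]; rewrite /sh /= MCZ !scalerAr. Qed.
Lemma gh_sh n x : gh n x -> gh (n + db) (sh x).
Proof.
case: x => a b [h1 h2]; split=> m /=; rewrite coefXM; case: m => // m /= hm.
  apply: h1; apply: contra hm => /eqP <-; apply/eqP.
  by rewrite -addn1 PoszD mulrDl mul1r.
apply: h2; apply: contra hm => /eqP <-; apply/eqP.
by rewrite -addn1 PoszD mulrDl mul1r addrA.
Qed.
Lemma coef_sh0 x : (sh x).1`_0 = 0.
Proof. by rewrite /sh coefXM. Qed.
Lemma coef_sh1 x : (sh x).1`_1 = x.1`_0.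
Proof. by rewrite /sh coefXM. Qed.

Definition c0 (y : MC) := y.1`_0.
Definition c1 (y : MC) := y.1`_1.
Lemma c0D y z : c0 (y + z) = c0 y + c0 z. Proof. by rewrite /c0 -coefD. Qed.
Lemma c1D y z : c1 (y + z) = c1 y + c1 z. Proof. by rewrite /c1 -coefD. Qed.
Lemma c0Z k y : c0 (k *: y) = k * c0 y. Proof. by rewrite /c0 -coefZ. Qed.
Lemma c1Z k y : c1 (k *: y) = k * c1 y. Proof. by rewrite /c1 -coefZ. Qed.
Lemma c0sh y : c0 (sh y) = 0. Proof. exact: coef_sh0. Qed.
Lemma c1sh y : c1 (sh y) = c0 y. Proof. exact: coef_sh1. Qed.

Lemma gh_c0 j y : gh j y -> c0 y != 0 -> j = db.
Proof.
case=> h _ nz; apply/eqP; apply: contraR nz => hj.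
by rewrite /c0 h // mul1r eq_sym.
Qed.
Lemma gh_c1 j y : gh j y -> c1 y != 0 -> j = db + db.
Proof.
case=> h _ nz; apply/eqP; apply: contraR nz => hj.
by rewrite /c1 h // -[2%N]/(1 + 1)%N PoszD mulrDl mul1r eq_sym.
Qed.

Lemma shsh n x : gh n x -> gh (n + (db + db)) (sh (sh x)).
Proof. by move=> h; rewrite addrA; do 2 apply: gh_sh. Qed.

Definition plC (x y : MC) : MC := c0 y *: sh x.
Lemma plC_Dl x y z : plC (x + y) z = plC x z + plC y z.
Proof. by rewrite /plC shD scalerDr. Qed.
Lemma plC_Zl k x z : plC (k *: x) z = k *: plC x z.
Proof. by rewrite /plC shZ !scalerA mulrC. Qed.
Lemma plC_Dr x y z : plC x (y + z) = plC x y + plC x z.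
Proof. by rewrite /plC c0D scalerDl. Qed.
Lemma plC_Zr k x y : plC x (k *: y) = k *: plC x y.
Proof. by rewrite /plC c0Z scalerA. Qed.
Lemma plC_hom i j x y : gh i x -> gh j y -> gh (i + j) (plC x y).
Proof.
move=> hx hy; rewrite /plC; have [->|nz] := eqVneq (c0 y) 0.
  by rewrite scale0r; apply: gh0.
by rewrite (gh_c0 hy nz); apply: ghZ; apply: gh_sh.
Qed.
Lemma plC_prelie i j k x y z : gh i x -> gh j y -> gh k z -> ~~ odd (absz db) ->
  plC (plC x y) z - plC x (plC y z) = psign K j k *: (plC (plC x z) y - plC x (plC z y)).
Proof.
move=> hx hy hz hdb.
have E : forall y z, plC (plC x y) z - plC x (plC y z) = (c0 z * c0 y) *: sh (sh x).
  by move=> y' z'; rewrite /plC shZ c0Z c0sh mulr0 scale0r subr0 scalerA.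
rewrite !E; have [y0|nz] := eqVneq (c0 y) 0.
  by rewrite y0 mulr0 mul0r scale0r scaler0.
by rewrite (gh_c0 hy nz) psign_evl // scale1r mulrC.
Qed.

Definition plB (x y : MC) : MC := c0 y *: sh x + c1 y *: sh (sh x).
Lemma plB_Dl x y z : plB (x + y) z = plB x z + plB y z.
Proof. by rewrite /plB !shD !scalerDr addrACA. Qed.
Lemma plB_Zl k x z : plB (k *: x) z = k *: plB x z.
Proof. by rewrite /plB !shZ !scalerA scalerDr !scalerA mulrC [c1 z * _]mulrC. Qed.
Lemma plB_Dr x y z : plB x (y + z) = plB x y + plB x z.
Proof. by rewrite /plB c0D c1D !scalerDl addrACA. Qed.
Lemma plB_Zr k x y : plB x (k *: y) = k *: plB x y.
Proof. by rewrite /plB c0Z c1Z scalerDr !scalerA. Qed.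
Lemma plB_hom i j x y : gh i x -> gh j y -> gh (i + j) (plB x y).
Proof.
move=> hx hy; rewrite /plB; apply: ghD.
  have [->|nz] := eqVneq (c0 y) 0; first by rewrite scale0r; apply: gh0.
  by rewrite (gh_c0 hy nz); apply: ghZ; apply: gh_sh.
have [->|nz] := eqVneq (c1 y) 0; first by rewrite scale0r; apply: gh0.
by rewrite (gh_c1 hy nz); apply: ghZ; apply: shsh.
Qed.
Lemma plB_prelie i j k x y z : gh i x -> gh j y -> gh k z ->
  plB (plB x y) z - plB x (plB y z) = psign K j k *: (plB (plB x z) y - plB x (plB z y)).
Proof.
move=> hx hy hz.
have E : forall y z, plB (plB x y) z - plB x (plB y z) =
    (c0 z * c1 y + c1 z * c0 y) *: sh (sh (sh x)) + (c1 z * c1 y) *: sh (sh (sh (sh x))).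
  move=> y' z'; rewrite /plB !shD !shZ !c0D !c1D !c0Z !c1Z !c0sh !c1sh !c0sh.
  rewrite !mulr0 !addr0 scale0r add0r !scalerDr !scalerA.
  by rewrite (AC ((2*2)*1) ((1*5)*(2*3*4))) /= subrr add0r scalerDl.
rewrite !E.
have [hj|oj] := boolP (~~ odd (absz j)).
  by rewrite psign_evl // scale1r [c0 y * c1 z]mulrC [c1 y * c0 z]mulrC [c1 y * c1 z]mulrC [c1 z * c0 y + _]addrC.
have [hk|ok] := boolP (~~ odd (absz k)).
  by rewrite psign_evr // scale1r [c0 y * c1 z]mulrC [c1 y * c0 z]mulrC [c1 y * c1 z]mulrC [c1 z * c0 y + _]addrC.
have y1 : c1 y = 0.
  have [//|nz] := eqVneq (c1 y) 0; move: oj.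
  by rewrite (gh_c1 hy nz) -mulr2n -mulr_natr abszM oddM /= andbF.
have z1 : c1 z = 0.
  have [//|nz] := eqVneq (c1 z) 0; move: ok.
  by rewrite (gh_c1 hz nz) -mulr2n -mulr_natr abszM oddM /= andbF.
by rewrite y1 z1 !mulr0 !mul0r !addr0 !scale0r addr0 scaler0.
Qed.
End Models.

Definition modelB (K : fieldType) (da db : int) : gpreLie K :=
  @GPreLie K (MC K) (@plB K) (@plB_Dl K) (@plB_Zl K) (@plB_Dr K) (@plB_Zr K)
    (@gh K da db) (@gh0 K da db) (@ghD K da db) (@ghZ K da db) (@gh_span K da db)
    (@gh_direct K da db) (@plB_hom K da db) (@plB_prelie K da db).

Definition modelC (K : fieldType) (da db : int) (hdb : ~~ odd (absz db)) : gpreLie K :=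
  @GPreLie K (MC K) (@plC K) (@plC_Dl K) (@plC_Zl K) (@plC_Dr K) (@plC_Zr K)
    (@gh K da db) (@gh0 K da db) (@ghD K da db) (@ghZ K da db) (@gh_span K da db)
    (@gh_direct K da db) (@plC_hom K da db)
    (fun i j k x y z hx hy hz => @plC_prelie K da db i j k x y z hx hy hz hdb).

Section Comp.
Variable K : fieldType.
Definition e1 : MC K := (1, 0).
Definition e2 : MC K := (0, 1).
Lemma c0_e1 : c0 e1 = 1. Proof. by rewrite /c0 /= coefC. Qed.
Lemma c1_e1 : c1 e1 = 0. Proof. by rewrite /c1 /= coefC. Qed.
Lemma c0_e2 : c0 e2 = 0. Proof. by rewrite /c0 /= coef0. Qed.

Lemma gh_e1 da db : gh da db db e1.
Proof.
split=> [[|m]|m] /=; rewrite ?coef0 ?coefC //.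
by rewrite mul1r eqxx.
Qed.
Lemma gh_e2 da db : gh da db da e2.
Proof.
split=> [m|[|m]] /=; rewrite ?coef0 ?coefC //.
by rewrite mul0r addr0 eqxx.
Qed.

Lemma gpowB da db n : gpow (modelB K da db) e1 n.+1 = ('X^n, 0).
Proof.
elim: n => [|n IH] //.
rewrite [LHS]/gpow /= -[iter _ _ _]/(gpow (modelB K da db) e1 n.+1) IH.
by rewrite /plB c0_e1 c1_e1 scale0r addr0 scale1r /sh /= mulr0 exprS.
Qed.
Lemma gpowC da db h n : gpow (@modelC K da db h) e1 n.+1 = ('X^n, 0).
Proof.
elim: n => [|n IH] //.
rewrite [LHS]/gpow /= -[iter _ _ _]/(gpow (@modelC K da db h) e1 n.+1) IH.
by rewrite /plC c0_e1 scale1r /sh /= mulr0 exprS.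
Qed.

Lemma powpow_zero da db N M : (1 < N)%N -> (1 < M)%N ->
  gpow (modelB K da db) (gpow (modelB K da db) e1 N.+1) M = 0.
Proof.
move=> hN hM; rewrite gpowB; case: M hM => [|[|M]] // _.
rewrite /gpow /= /plB /c0 /c1 /= !coefXn.
have -> : (0%N == N) = false by case: N hN.
have -> : (1%N == N) = false by case: N hN => [|[]].
by rewrite !scale0r addr0.
Qed.

Lemma Xn_neq0 n : ('X^n, 0) <> 0 :> MC K.
Proof. by move/(congr1 (fun x : MC K => size x.1)); rewrite /= size_polyXn size_poly0. Qed.

Lemma partb_even p d : prime p -> ~ (forall (k l : nat) (A : gpreLie K) (a : gcar A), ghom A d a ->
             gpow A (gpow A a (p ^ k)) (p ^ l) = gpow A a (p ^ (k + l))).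
Proof.
move=> pp H; have p2 := prime_gt1 pp.
have := H 2 1 (modelB K 0 d) e1 (gh_e1 0 d).
have e2 : (p ^ 2 = (p ^ 2).-1.+1)%N by rewrite prednK // expn_gt0 prime_gt0.
have e3 : (p ^ (2 + 1) = (p ^ (2 + 1)).-1.+1)%N by rewrite prednK // expn_gt0 prime_gt0.
rewrite expn1 {1}e2 e3 powpow_zero // ?gpowB; first by move/esym/Xn_neq0.
rewrite -ltnS -e2 expnS expn1; nia.
Qed.

Lemma partb_odd p d : prime p -> ~ (forall (k l : nat) (A : gpreLie K) (b : gcar A), ghom A d b ->
             gpow A (gpow A b (2 * p ^ k)) (p ^ l) = gpow A b (2 * p ^ (k + l))).
Proof.
move=> pp H; have p2 := prime_gt1 pp.
have := H 1 1 (modelB K 0 d) e1 (gh_e1 0 d).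
have p0 : (0 < p)%N by apply: prime_gt0.
have e2 : (2 * p ^ 1 = (2 * p ^ 1).-1.+1)%N by rewrite prednK // muln_gt0 expn_gt0 p0.
have e3 : (2 * p ^ (1 + 1) = (2 * p ^ (1 + 1)).-1.+1)%N by rewrite prednK // muln_gt0 expn_gt0 p0.
rewrite [(p ^ 1)%N]expn1 {1}e2 e3 powpow_zero // ?gpowB; first by move/esym/Xn_neq0.
rewrite -ltnS -e2 expn1; nia.
Qed.

Lemma partc p da db (hdb : ~~ odd (absz db)) : prime p ->
  ~ (forall (A : gpreLie K) (a b : gcar A), ghom A da a -> ghom A db b ->
             gbr A da (p%:Z * db) a (gpow A b p) = itbr A da db a b p).
Proof.
move=> pp H; have p2 := prime_gt1 pp.
have := H (@modelC K da db hdb) e2 e1 (gh_e2 da db) (gh_e1 da db).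
have it : forall n, itbr (@modelC K da db hdb) da db e2 e1 n = (0, 'X^n).
  elim=> [|n IH] //=; rewrite IH /gbr /= /plC c0_e1 /c0 /= coef0 scale0r scaler0 subr0.
  by rewrite scale1r /sh /= mulr0 exprS.
rewrite it -(prednK (prime_gt0 pp)) gpowC /gbr /= /plC c0_e2 scale0r /c0 /= coefXn.
have -> : (0%N == p.-1) = false by case: p p2 {H it pp} => [|[]].
rewrite scale0r scaler0 subr0 => /esym /(congr1 snd) /= /eqP; by rewrite -size_poly_eq0 size_polyXn.
Qed.
End Comp.

End Aux.

Theorem theorem7p8 (p : nat) (hp : prime p) (K : fieldType) (hK : p \in [pchar K]) :
  (* (a) *)
  (forall (A : gpreLie K) (i1 i2 i3 : int) (a1 a2 a3 : gcar A),
     ghom A i1 a1 -> ghom A i2 a2 -> ghom A i3 a3 ->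
     psign K i1 i3 *: gbr A (i1 + i2) i3 (gbr A i1 i2 a1 a2) a3
     + psign K i2 i1 *: gbr A (i2 + i3) i1 (gbr A i2 i3 a2 a3) a1
     + psign K i3 i2 *: gbr A (i3 + i1) i2 (gbr A i3 i1 a3 a1) a2 = 0)
  /\ (p = 2%N -> forall (A : gpreLie K) (i : int) (x : gcar A),
        ghom A i x -> gbr A i i x x = 0)
  /\ (p = 3%N -> forall (A : gpreLie K) (i : int) (x : gcar A),
        ghom A i x -> gbr A (i + i) i (gbr A i i x x) x = 0)
  (* (b) *)
  /\ (forall d : int, ~~ odd (absz d) ->
        ~ (forall (k l : nat) (A : gpreLie K) (a : gcar A), ghom A d a ->
             gpow A (gpow A a (p ^ k)) (p ^ l) = gpow A a (p ^ (k + l))))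
  /\ (forall d : int, odd (absz d) ->
        ~ (forall (k l : nat) (A : gpreLie K) (b : gcar A), ghom A d b ->
             gpow A (gpow A b (2 * p ^ k)) (p ^ l) = gpow A b (2 * p ^ (k + l))))
  (* (c) *)
  /\ (forall da db : int, ~~ odd (absz db) ->
        ~ (forall (A : gpreLie K) (a b : gcar A), ghom A da a -> ghom A db b ->
             gbr A da (p%:Z * db) a (gpow A b p) = itbr A da db a b p))
  (* (d) *)
  /\ (forall (A : gpreLie K) (d0 d1 : int) (c0 c1 : gcar A),
        ~~ odd (absz d0) -> ~~ odd (absz d1) -> ghom A d0 c0 -> ghom A d1 c1 ->
        forall dd : nat -> gcar A,
        (forall i : nat, (1 <= i <= p - 1)%N ->
           i%:R *: dd i =
           \sum_(e : (p - 2).-tuple bool | count id e == i.-1)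
              nestbr A d0 d1 c0 c1 (d1 + d0) (gbr A d1 d0 c1 c0) e) ->
        gpow A (c1 + c0) p = gpow A c1 p + gpow A c0 p + \sum_(1 <= i < p) dd i).
Proof.
have pp := pcharf_prime hK.
split.
  move=> A i1 i2 i3 a1 a2 a3 h1 h2 h3; exact: Aux.jacobi.
split.
  move=> p2 A i x hx; subst p; exact: Aux.br_sq.
split.
  move=> _ A i x hx; exact: Aux.br_cube.
split.
  move=> d _; exact: Aux.partb_even.
split.
  move=> d _; exact: Aux.partb_odd.
split.
  move=> da db hdb; exact: Aux.partc.
move=> A d0 d1 c0 c1 e0 e1 h0 h1 dd Hdd; apply: (Aux.part_d hK e0 e1 h0 h1 Hdd).
Qed.
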